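(* Let $\mathfrak A,\mathfrak B$ be $*$-algebras and let $\sigma,\tau:\mathfrak A\to\mathfrak B$ be $*$-linear mappings. Then every $*$-$(\sigma,\tau)$-derivation $d:\mathfrak A\to\mathfrak B$ is a $*$-$\frac{\sigma+\tau}{2}$-derivation, i.e. $d(ab)=d(a)\frac{\sigma+\tau}{2}(b)+\frac{\sigma+\tau}{2}(a)d(b)$ for all $a,b\in\mathfrak A$.
   Context: A map $\sigma$ between $*$-algebras is $*$-linear if it is linear and $\sigma(a^* )=\sigma(a)^*$. A $*$-$(\sigma,\tau)$-derivation is a linear map $d:\mathfrak A\to\mathfrak B$ with $d(a^* )=d(a)^*$ and $d(ab)=d(a)\sigma(b)+\tau(a)d(b)$ for all $a,b\in\mathfrak A$. For a linear map $\gamma:\mathfrak A\to\mathfrak B$, a $*$-$\gamma$-derivation is a $*$-preserving linear map $d$ with $d(ab)=d(a)\gamma(b)+\gamma(a)d(b)$ for all $a,b$. *)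

(* Defs.v *)
(* *-algebras over a numeric closed field C (e.g. algC = complex
   algebraic numbers, or any field with conjugation). Algebras are possibly
   non-unital: a C-vector space with an associative bilinear product. *)
From mathcomp Require Import all_boot all_order all_algebra.
Set Implicit Arguments. Unset Strict Implicit. Unset Printing Implicit Defensive.
Import Order.TTheory GRing.Theory Num.Theory.
Local Open Scope ring_scope.

Definition is_algebra (C : numClosedFieldType) (A : lmodType C)
  (mul : A -> A -> A) : Prop :=
  [/\ forall a b c, mul a (mul b c) = mul (mul a b) c,
      forall k a b c, mul (k *: a + b) c = k *: mul a c + mul b c
    & forall k a b c, mul a (k *: b + c) = k *: mul a b + mul a c].

Definition is_star_algebra (C : numClosedFieldType) (A : lmodType C)
  (mul : A -> A -> A) (star : A -> A) : Prop :=
  [/\ is_algebra mul,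
      forall a b, star (a + b) = star a + star b,
      forall (k : C) a, star (k *: a) = k^* *: star a,
      forall a b, star (mul a b) = mul (star b) (star a)
    & forall a, star (star a) = a].

Definition is_linear (C : numClosedFieldType) (A B : lmodType C) (f : A -> B) :=
  forall (k : C) x y, f (k *: x + y) = k *: f x + f y.

Definition star_linear (C : numClosedFieldType) (A B : lmodType C)
  (starA : A -> A) (starB : B -> B) (f : A -> B) : Prop :=
  is_linear f /\ forall a, f (starA a) = starB (f a).

Definition star_sigma_tau_derivation (C : numClosedFieldType) (A B : lmodType C)
  (mulA : A -> A -> A) (starA : A -> A) (mulB : B -> B -> B) (starB : B -> B)
  (sigma tau d : A -> B) : Prop :=
  [/\ is_linear d, forall a, d (starA a) = starB (d a)
    & forall a b, d (mulA a b) = mulB (d a) (sigma b) + mulB (tau a) (d b)].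

Definition star_gamma_derivation (C : numClosedFieldType) (A B : lmodType C)
  (mulA : A -> A -> A) (starA : A -> A) (mulB : B -> B -> B) (starB : B -> B)
  (gamma d : A -> B) : Prop :=
  [/\ is_linear d, forall a, d (starA a) = starB (d a)
    & forall a b, d (mulA a b) = mulB (d a) (gamma b) + mulB (gamma a) (d b)].

(* Main.v *)
Require Import Defs.
From mathcomp Require Import all_boot all_order all_algebra.
Import GRing.Theory Num.Theory.
Local Open Scope ring_scope.

Lemma alg_facts (C : numClosedFieldType) (B : lmodType C) (mul : B -> B -> B) :
  is_algebra mul ->
  [/\ forall a b c, mul (a + b) c = mul a c + mul b c,
      forall a b c, mul a (b + c) = mul a b + mul a c,
      forall (k : C) a c, mul (k *: a) c = k *: mul a c
    & forall (k : C) a c, mul a (k *: c) = k *: mul a c].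
Proof.
case=> _ hl hr.
have l0 : forall c, mul 0 c = 0.
  move=> c; have := hl 1 0 0 c; rewrite !scale1r addr0 => h.
  by apply: (addrI (mul 0 c)); rewrite addr0 -h.
have r0 : forall c, mul c 0 = 0.
  move=> c; have := hr 1 c 0 0; rewrite !scale1r addr0 => h.
  by apply: (addrI (mul c 0)); rewrite addr0 -h.
split=> [a b c|a b c|k a c|k a c].
  by rewrite -[a]scale1r hl !scale1r.
  by rewrite -[b]scale1r hr !scale1r.
  by rewrite -[k *: a]addr0 hl l0 addr0.
by rewrite -[k *: c]addr0 hr r0 addr0.
Qed.

Theorem proposition3p1 (C : numClosedFieldType) (A B : lmodType C)
  (mulA : A -> A -> A) (starA : A -> A) (mulB : B -> B -> B) (starB : B -> B)
  (sigma tau d : A -> B) :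
  is_star_algebra mulA starA -> is_star_algebra mulB starB ->
  star_linear starA starB sigma -> star_linear starA starB tau ->
  star_sigma_tau_derivation mulA starA mulB starB sigma tau d ->
  star_gamma_derivation mulA starA mulB starB
    (fun a => (2 : C)^-1 *: (sigma a + tau a)) d.
Proof.
case=> _ _ _ sAM _ [algB sBD _ sBM sBK] [_ sgs] [_ tas] [dlin ds dm].
have [mD Dm mZ Zm] := @alg_facts _ _ _ algB.
split => // a b.
have swap : d (mulA a b) = mulB (sigma a) (d b) + mulB (d a) (tau b).
  rewrite -[d (mulA a b)]sBK -ds sAM dm !ds sgs tas -!sBM -sBD sBK.
  by rewrite addrC.
rewrite Zm mZ mD Dm -scalerDr.
have -> : mulB (d a) (sigma b) + mulB (d a) (tau b) +
          (mulB (sigma a) (d b) + mulB (tau a) (d b)) = d (mulA a b) + d (mulA a b).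
  by rewrite {1}dm swap addrACA [RHS]addrACA [_ + mulB (d a) (tau b)]addrC.
rewrite -[X in X + X]scale1r -scalerDl scalerA mulVf ?scale1r //.
by rewrite pnatr_eq0.
Qed.
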